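(* Let $j\in\mathcal J$ and let $\mathcal S_j=\mathcal Q(\mathcal F_j)$. Then $\{(\hat f_j,\hat h_j):\exists\,\hat z_j\text{ with }((\hat f_j,\hat h_j),\hat z_j)\in\mathcal S_j\}=\mathcal K(\mathcal C^{(\chi)}_j)$, the convex hull of $\{\Xi_j(\tilde b):\tilde b\in\mathcal C^{(\chi)}_j\}$.
   Context: Let $R$ be a finite ring with $q$ elements, $R^-=R\setminus\{0\}$, $\mathcal H$ an $m\times n$ matrix over $R$, $\mathcal J=\{1,\dots,m\}$. Fix $j\in\mathcal J$, let $\mathcal I_j=\{i:\mathcal H_{j,i}\ne0\}=\{i_1,\dots,i_{d_j}\}$ in a fixed order, with $d_j\ge4$. Let $\mathcal F_j$ be the $(d_j-2)\times(2d_j-3)$ matrix over $R$, acting on vectors $(b\mid\chi^j)$ with $b=(b_{i_1},\dots,b_{i_{d_j}})$ and $\chi^j=(\chi^j_1,\dots,\chi^j_{d_j-3})$, whose rows express the equations $b_{i_1}\mathcal H_{j,i_1}+b_{i_2}\mathcal H_{j,i_2}+\chi^j_1=0$; $-\chi^j_\ell+b_{i_{\ell+2}}\mathcal H_{j,i_{\ell+2}}+\chi^j_{\ell+1}=0$ for $\ell=1,\dots,d_j-4$; $-\chi^j_{d_j-3}+b_{i_{d_j-1}}\mathcal H_{j,i_{d_j-1}}+b_{i_{d_j}}\mathcal H_{j,i_{d_j}}=0$; and $\mathcal C^{(\chi)}_j$ is the code of length $2d_j-3$ consisting of all solutions. For any $r\times N$ matrix $\mathcal A$ over $R$ with rows indexed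 by $\rho$, let $\mathcal A$'s local codes be $\mathcal C_\rho=\{g\in R^{\mathrm{supp}(\mathcal A_\rho)}:\sum_{i}g_i\mathcal A_{\rho,i}=0\}$, and let $\mathcal Q(\mathcal A)$ be the set of $(F,W)$, $F=(F_i^{(\alpha)})_{i\le N,\alpha\in R^-}$ real, $W=(W_{\rho,g})_{\rho,g\in\mathcal C_\rho}$ real, with $W_{\rho,g}\ge0$, $\sum_{g\in\mathcal C_\rho}W_{\rho,g}=1$ for each $\rho$, and $F_i^{(\alpha)}=\sum_{g\in\mathcal C_\rho,g_i=\alpha}W_{\rho,g}$ for all $\rho$, $i\in\mathrm{supp}(\mathcal A_\rho)$, $\alpha\in R^-$. For $\mathcal A=\mathcal F_j$, write points of $\mathcal Q(\mathcal F_j)$ as $((\hat f_j,\hat h_j),\hat z_j)$ where $\hat f_j$ collects the $F$-coordinates for the $b$-positions and $\hat h_j$ those for the $\chi^j$-positions. Let $\xi:R\to\{0,1\}^{q-1}$ (coordinates indexed by $R^-$), $\xi(a)^{(\gamma)}=1$ iff $\gamma=a$, and $\Xi_j(b\mid\chi^j)=(\xi(b_{i_1})\mid\cdots\mid\xi(b_{i_{d_j}})\mid\xi(\chi^j_1)\mid\cdots\mid\xi(\chi^j_{d_j-3}))$. *)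

(* Defs.v *)
From HB Require Import structures.
From mathcomp Require Import all_boot all_order all_algebra.
From mathcomp Require Import reals.
Set Implicit Arguments. Unset Strict Implicit. Unset Printing Implicit Defensive.
Import Order.TTheory GRing.Theory Num.Theory.
Local Open Scope ring_scope.

Definition nzelt (Rg : finNzRingType) := {x : Rg | x != 0}.

Definition suppT (Rg : finNzRingType) r N (A : 'M[Rg]_(r, N)) (rho : 'I_r) :=
  {i : 'I_N | A rho i != 0}.

Definition in_local_code (Rg : finNzRingType) r N (A : 'M[Rg]_(r, N)) (rho : 'I_r)
  (g : {ffun suppT A rho -> Rg}) : bool :=
  \sum_(i : suppT A rho) g i * A rho (val i) == 0.

(* (F, W) in Q(A).  W is given on all of R^{supp(A_rho)}; only its values on
   the local code C_rho are constrained/used. *)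
Definition inQ (K : realType) (Rg : finNzRingType) r N (A : 'M[Rg]_(r, N))
  (F : 'I_N -> nzelt Rg -> K)
  (W : forall rho : 'I_r, {ffun suppT A rho -> Rg} -> K) : Prop :=
  [/\ (forall rho g, in_local_code g -> 0 <= W rho g),
      (forall rho, \sum_(g | in_local_code g) W rho g = 1) &
      (forall rho (i : suppT A rho) (alpha : nzelt Rg),
          F (val i) alpha =
          \sum_(g | in_local_code g && (g i == val alpha)) W rho g)].

Definition in_code (Rg : finNzRingType) r N (A : 'M[Rg]_(r, N))
  (x : {ffun 'I_N -> Rg}) : bool :=
  [forall rho, \sum_(i < N) x i * A rho i == 0].

Definition Xi (K : realType) (Rg : finNzRingType) N (x : {ffun 'I_N -> Rg})
  (i : 'I_N) (alpha : nzelt Rg) : K :=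
  if x i == val alpha then 1 else 0.

Definition in_conv_hull (K : realType) (Rg : finNzRingType) N
  (C : pred {ffun 'I_N -> Rg}) (F : 'I_N -> nzelt Rg -> K) : Prop :=
  exists lam : {ffun 'I_N -> Rg} -> K,
    [/\ (forall c, C c -> 0 <= lam c),
        \sum_(c | C c) lam c = 1 &
        (forall i alpha, F i alpha = \sum_(c | C c) lam c * Xi K c i alpha)].

(* h : 'I_d -> Rg are the nonzero entries H_{j,i_1},...,H_{j,i_d} (0-based).
   Columns 0..d-1 are b_{i_1..i_d}; column d+k is chi_{k+1} (k = 0..d-4).
   Rows (0-based) rho = 0 .. d-3 are the d-2 equations of the context. *)
Definition Fmat (Rg : finNzRingType) (d : nat) (h : 'I_d -> Rg)
  : 'M[Rg]_(d - 2, d + (d - 3)) :=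
  \matrix_(rho < d - 2, c < d + (d - 3))
    let r := val rho in let c := val c in
    let hc := if @insub nat (fun k => (k < d)%N) 'I_d c is Some k then h k else 0 in
    if r == 0%N then
      (if (c == 0%N) || (c == 1%N) then hc
       else if c == d then 1 else 0)
    else if r == (d - 3)%N then
      (if c == (d + (d - 4))%N then -1
       else if (c == (d - 2)%N) || (c == (d - 1)%N) then hc else 0)
    else
      (if c == (d + r - 1)%N then -1
       else if c == r.+1 then hc
       else if c == (d + r)%N then 1 else 0).

Definition Fj (Rg : finNzRingType) m n (H : 'M[Rg]_(m, n)) (j : 'I_m) d
  (idx : 'I_d -> 'I_n) := Fmat (fun k => H j (idx k)).

(* Main.v *)
Require Import Defs.
From HB Require Import structures.
From mathcomp Require Import all_boot all_order all_algebra.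
From mathcomp Require Import reals.
Import Order.TTheory GRing.Theory Num.Theory.
Local Open Scope ring_scope.
Set Implicit Arguments. Unset Strict Implicit. Unset Printing Implicit Defensive.

Section Glue.
Variable K : realType.

Lemma glue (X Y : finType) (S : eqType) (f : X -> S) (g : Y -> S) (P : X -> K) (Q : Y -> K) :
  (forall x, 0 <= P x) -> (forall y, 0 <= Q y) ->
  (forall s, \sum_(x | f x == s) P x = \sum_(y | g y == s) Q y) ->
  exists R : X -> Y -> K,
  [/\ (forall x, \sum_y R x y = P x), (forall y, \sum_x R x y = Q y),
      (forall x y, 0 <= R x y) &
      (forall x y, R x y != 0 -> [/\ f x = g y, P x != 0 & Q y != 0])].
Proof.
move=> P0 Q0 hm.
exists (fun x y => if f x == g y then P x * Q y / (\sum_(x' | f x' == f x) P x') else 0); split.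
- move=> x; rewrite /= -big_mkcond /=.
  under eq_bigl do rewrite eq_sym.
  under eq_bigr do rewrite mulrAC.
  rewrite -big_distrr /= -hm.
  have [mu0|mu0] := eqVneq (\sum_(x' | f x' == f x) P x') 0.
    have := psumr_eq0P (fun i _ => P0 i) mu0 (eqxx (f x)) => ->.
    by rewrite !mul0r.
  by rewrite divfK.
- move=> y; rewrite /= -big_mkcond /=.
  rewrite (eq_bigr (fun x => P x * (Q y / \sum_(x' | f x' == g y) P x'))); last first.
    by move=> x /eqP ->; rewrite mulrA.
  rewrite -big_distrl /=.
  have [mu0|mu0] := eqVneq (\sum_(x' | f x' == g y) P x') 0.
    move: (mu0); rewrite hm => mu0'.
    have := psumr_eq0P (fun i _ => Q0 i) mu0' (eqxx (g y)) => ->.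
    by rewrite !mul0r mulr0.
  by rewrite mulrCA divff // mulr1.
- move=> x y; rewrite /=; case: ifP => _ //.
  by rewrite mulr_ge0 ?mulr_ge0 ?invr_ge0 ?sumr_ge0.
- move=> x y; rewrite /=; case: (f x =P g y) => fg; last by rewrite eqxx.
  by rewrite !mulf_eq0 !negb_or => /andP[/andP[a b] c]; split.
Qed.

Lemma sum_cond (T : finType) (c : pred T) (G : T -> K) :
  \sum_(x | c x) G x = \sum_x G x * (if c x then 1 else 0).
Proof. by rewrite big_mkcond; apply: eq_bigr => x _; case: (c x); rewrite ?mulr1 ?mulr0. Qed.
End Glue.


Section Chain.
Variables (K : realType) (Rg : finNzRingType) (r N : nat) (A : 'M[Rg]_(r, N)).
Local Notation FF := {ffun 'I_N -> Rg}.
Local Notation LW rho := {ffun suppT A rho -> Rg}.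

Definition restr (x : FF) (rho : 'I_r) : LW rho := [ffun i => x (val i)].
Definition look rho (y : LW rho) (c : 'I_N) : Rg :=
  if (insub c : option (suppT A rho)) is Some i then y i else 0.
Definition merge rho (x : FF) (y : LW rho) : FF :=
  [ffun c => if (insub c : option (suppT A rho)) is Some i then y i else x c].

Lemma restr_merge rho x (y : LW rho) : restr (merge x y) rho = y.
Proof. by apply/ffunP => i; rewrite !ffunE valK. Qed.

Lemma look_restr rho x c (h : A rho c != 0) : look (restr x rho) c = x c.
Proof. by rewrite /look insubT ffunE. Qed.

Lemma look_sub rho (y : LW rho) (i : suppT A rho) : look y (val i) = y i.
Proof. by rewrite /look valK. Qed.

Lemma look_Sub rho (y : LW rho) c (h : A rho c != 0) : look y c = y (Sub c h).
Proof. by rewrite /look insubT. Qed.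

Lemma in_code_restr x : in_code A x = [forall rho, in_local_code (restr x rho)].
Proof.
apply: eq_forallb => rho; rewrite /in_local_code.
congr (_ == 0).
rewrite (bigID (fun i => A rho i != 0)) /= [X in _ + X]big1 ?addr0; last first.
  by move=> i /negbNE/eqP ->; rewrite mulr0.
rewrite (reindex_omap (val : suppT A rho -> 'I_N) insub); last first.
  by move=> i Hi; rewrite insubT.
apply: eq_big => [k|k _]; first by rewrite (valP k) valK eqxx.
by rewrite ffunE.
Qed.

Definition Inv (W : forall rho, LW rho -> K) (t : nat) (P : FF -> K) : Prop :=
 [/\ forall x, 0 <= P x, \sum_x P x = 1,
     forall x, P x != 0 -> forall rho : 'I_r, (rho < t)%N -> in_local_code (restr x rho)
   & forall rho : 'I_r, (rho < t)%N -> forall w, in_local_code w ->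
       \sum_(x | restr x rho == w) P x = W rho w].

Lemma step W t P (rho : 'I_r) (f : FF -> Rg) (g : LW rho -> Rg) :
  val rho = t ->
  (forall g, in_local_code g -> 0 <= W rho g) ->
  Inv W t P ->
  (forall s, \sum_(x | f x == s) P x = \sum_(y | in_local_code y && (g y == s)) W rho y) ->
  (forall x y, f x = g y -> forall rho' : 'I_r, (rho' < t)%N -> restr (merge x y) rho' = restr x rho') ->
  exists P', Inv W t.+1 P'.
Proof.
move=> rt Wge [P0 P1 Psupp Pmarg] hm hmerge.
pose Q (y : LW rho) := if in_local_code y then W rho y else 0.
have Q0 : forall y, 0 <= Q y by move=> y; rewrite /Q; case: ifP => // /Wge.
have hm' : forall s, \sum_(x | f x == s) P x = \sum_(y | g y == s) Q y.
  move=> s; rewrite hm [RHS]big_mkcond [LHS]big_mkcond; apply: eq_bigr => y _.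
  by rewrite /Q; case: in_local_code; case: (g y == s).
have [R [RP RQ R0 Rnz]] := glue P0 Q0 hm'.
pose P' z := \sum_(p : FF * LW rho | merge p.1 p.2 == z) R p.1 p.2.
have push : forall phi : FF -> K, \sum_z P' z * phi z = \sum_x \sum_y R x y * phi (merge x y).
  move=> phi; symmetry; rewrite pair_big /=.
  rewrite (partition_big (fun p => merge p.1 p.2) xpredT) //=.
  apply: eq_bigr => z _; rewrite /P' big_distrl /=.
  by apply: eq_big => [p|p /eqP <-].
have cond : forall (c : pred FF), \sum_(z | c z) P' z =
    \sum_x \sum_y R x y * (if c (merge x y) then 1 else 0).
  by move=> c; rewrite sum_cond (push (fun z => if c z then 1 else 0)).
exists P'; split.
- by move=> z; apply: sumr_ge0 => p _; exact: R0.
- have := cond xpredT; rewrite /= => ->.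
  under eq_bigr do under eq_bigr do rewrite mulr1.
  by under eq_bigr do rewrite RP.
- move=> z nz rho' lt.
  case: (boolP [exists p, (merge p.1 p.2 == z) && (R p.1 p.2 != 0)]) => [|/existsPn hn].
    move=> /existsP[[x y] /andP[/= /eqP mz Rp]].
    have [fg Px Qy] := Rnz x y Rp.
    rewrite -mz; case: (ltnP rho' t) => h.
      by rewrite hmerge //; exact: Psupp.
    have -> : rho' = rho by apply: val_inj; rewrite rt; apply/eqP; rewrite eqn_leq h -ltnS lt.
    rewrite restr_merge; move: Qy; rewrite /Q; case: ifP => // _; by rewrite eqxx.
  move: nz; rewrite /P' big1 ?eqxx // => p mp.
  by move: (hn p); rewrite mp /= negbK => /eqP.
- move=> rho' lt w lw; rewrite cond.
  case: (ltnP rho' t) => h.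
    rewrite -(Pmarg rho' h w lw) (sum_cond _ P).
    apply: eq_bigr => x _; rewrite -RP big_distrl /=; apply: eq_bigr => y _.
    case: (eqVneq (R x y) 0) => [->|Rn]; first by rewrite !mul0r.
    by have [fg _ _] := Rnz x y Rn; rewrite hmerge.
  have erho : rho' = rho by apply: val_inj; rewrite rt; apply/eqP; rewrite eqn_leq h -ltnS lt.
  subst rho'.
  under eq_bigr do under eq_bigr do rewrite restr_merge.
  rewrite exchange_big /=.
  under eq_bigr do rewrite -big_distrl /= RQ.
  by rewrite -sum_cond big_pred1_eq /Q lw.
Qed.

Lemma margeq W (F : 'I_N -> nzelt Rg -> K) (hQ : inQ F W) rho1 rho2 s
  (h1 : A rho1 s != 0) (h2 : A rho2 s != 0) v :
  \sum_(w | in_local_code w && (look w s == v)) W rho1 w =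
  \sum_(w | in_local_code w && (look w s == v)) W rho2 w.
Proof.
have [Wge Wsum Wf] := hQ.
have Mnz : forall rho (h : A rho s != 0) v (hv : v != 0),
    \sum_(w | in_local_code w && (look w s == v)) W rho w = F s (exist _ v hv).
  move=> rho h v' hv; have e := Wf rho (Sub s h) (exist _ v' hv); rewrite /= in e.
  by rewrite e; apply: eq_bigl => w; rewrite look_Sub.
have tot : forall rho (h : A rho s != 0),
    \sum_v \sum_(w | in_local_code w && (look w s == v)) W rho w = 1.
  move=> rho h; rewrite -(Wsum rho).
  by rewrite [RHS](partition_big (fun w => look w s) xpredT).
case: (eqVneq v 0) => [->|hv]; last by rewrite (Mnz _ h1 v hv) (Mnz _ h2 v hv).
have e1 := tot rho1 h1; have e2 := tot rho2 h2.
rewrite (bigD1 (0 : Rg)) //= in e1; rewrite (bigD1 (0 : Rg)) //= in e2.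
set S1 := (X in _ + X = 1) in e1; set S2 := (X in _ + X = 1) in e2.
have eS : S1 = S2.
  by rewrite /S1 /S2; apply: eq_bigr => v' hv; rewrite (Mnz _ h1 v' hv) (Mnz _ h2 v' hv).
by apply: (addIr S2); rewrite e2 -eS e1.
Qed.

Lemma build W (F : 'I_N -> nzelt Rg -> K) (hQ : inQ F W)
  (chain : forall rho1 rho2 : 'I_r, val rho2 = (val rho1).+1 ->
     exists s, [/\ A rho1 s != 0, A rho2 s != 0 &
        forall rho' : 'I_r, (rho' <= rho1)%N -> forall c, A rho' c != 0 -> A rho2 c != 0 -> c = s]) :
  forall t, (t <= r)%N -> exists P, Inv W t P.
Proof.
have [Wge Wsum Wf] := hQ.
elim=> [_|t IH ht].
  exists (fun x => if x == [ffun=> 0] then 1 else 0); split => //.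
  - by move=> x; case: ifP.
  - by rewrite -big_mkcond big_pred1_eq.
have [P HP] := IH (ltnW ht).
pose rho := Ordinal ht.
move: ht HP @rho; case: t {IH} => [|t'] ht HP rho.
  apply: (step (P := P) (rho:=rho) (f := fun _ => 0) (g := fun _ => 0)) => //.
  - by move=> g; exact: Wge.
  - move=> s; have [e|ns] : (0:Rg) = s \/ (0:Rg) != s by case: eqP; [left|right].
      rewrite -e eqxx; case: HP => _ -> _ _; rewrite -(Wsum rho).
      by apply: eq_bigl => y; rewrite andbT.
    rewrite (negbTE ns) big_pred0_eq; under eq_bigl do rewrite andbF.
    by rewrite big_pred0_eq.
have lt1 : (t' < r)%N by apply: ltnW.
pose rho1 := Ordinal lt1.
have [s [h1 h2 hc]] := chain rho1 rho erefl.
have [P0 P1 Psupp Pmarg] := HP.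
have lt1' : (rho1 < t'.+1)%N by [].
apply: (step (P := P) (rho:=rho) (f := fun x => x s) (g := fun y => look y s)) => //.
- by move=> g; exact: Wge.
- move=> v; rewrite -(margeq hQ h1 h2 v).
  rewrite (bigID (fun x => in_local_code (restr x rho1))) /= [X in _ + X]big1 ?addr0; last first.
    move=> x /andP[_ nl]; case: (eqVneq (P x) 0) => // Px.
    by rewrite (Psupp x Px rho1 lt1') in nl.
  rewrite (partition_big (fun x => restr x rho1)
     (fun w => in_local_code w && (look w s == v))) /=; last first.
    by move=> x /andP[xv lx]; rewrite lx (look_restr x h1).
  apply: eq_bigr => w /andP[lw /eqP lv]; rewrite -(Pmarg rho1 lt1' w lw).
  apply: eq_bigl => x.
  case: (eqVneq (restr x rho1) w) => [e|]; rewrite ?andbF ?andbT //.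
  by rewrite e lw andbT -lv -e (look_restr x h1) eqxx.
- move=> x y fg rho' lt; apply/ffunP => i; rewrite !ffunE.
  case: insubP => [k hk vk|_] //.
  have cs := hc rho' lt (val i) (valP i) hk.
  by rewrite -look_sub vk cs fg.
Qed.

Lemma final W (F : 'I_N -> nzelt Rg -> K) P (hQ : inQ F W)
  (cover : forall i : 'I_N, exists rho, A rho i != 0) :
  Inv W r P -> in_conv_hull (in_code A) F.
Proof.
move=> [P0 P1 Psupp Pmarg]; have [Wge Wsum Wf] := hQ.
have Pcode : forall x, P x != 0 -> in_code A x.
  by move=> x Px; rewrite in_code_restr; apply/forallP => rho; exact: Psupp x Px rho (ltn_ord rho).
have Pz : forall x, ~~ in_code A x -> P x = 0.
  by move=> x nc; apply/eqP; exact: (contraNT (Pcode x) nc).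
exists (fun c => P c); split.
- by move=> c _.
- by rewrite -P1 [RHS](bigID (in_code A)) /= [X in _ + X]big1 ?addr0 // => x; exact: Pz.
- move=> i alpha; have [rho h] := cover i.
  have e := Wf rho (Sub i h) alpha; rewrite /= in e; rewrite e.
  transitivity (\sum_(g | in_local_code g && (g (Sub i h) == val alpha))
                 \sum_(x | (in_local_code (restr x rho) && (x i == val alpha)) && (restr x rho == g)) P x).
    apply: eq_bigr => g /andP[lg gi]; rewrite -(Pmarg rho (ltn_ord rho) g lg).
    apply: eq_bigl => x; case: (eqVneq (restr x rho) g) => [ex|]; rewrite ?andbF ?andbT //.
    by move/eqP: gi; rewrite -ex ffunE /= => ->; rewrite ex lg eqxx.
  rewrite -(partition_big (fun x => restr x rho)
     (fun g => in_local_code g && (g (Sub i h) == val alpha))); last first.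
    by move=> x /andP[l ei]; rewrite l ffunE.
  rewrite big_mkcond [RHS]big_mkcond; apply: eq_bigr => x _.
  case: (eqVneq (P x) 0) => [->|Px]; first by rewrite mul0r !if_same.
  rewrite (Pcode x Px) (Psupp x Px rho (ltn_ord rho)) /= /Xi.
  by case: (x i == val alpha); rewrite ?mulr1 ?mulr0.
Qed.

Lemma conv_to_Q (F : 'I_N -> nzelt Rg -> K) :
  in_conv_hull (in_code A) F -> exists W, inQ F (A := A) W.
Proof.
move=> [lam [lam0 lam1 lamF]].
exists (fun rho (g : LW rho) => \sum_(c | in_code A c && (restr c rho == g)) lam c); split.
- move=> rho g _; apply: sumr_ge0 => c /andP[cc _]; exact: lam0.
- move=> rho; rewrite -lam1 [RHS](partition_big (fun c => restr c rho) (fun g => in_local_code g)) //.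
  by move=> c; rewrite in_code_restr => /forallP; apply.
- move=> rho i alpha; rewrite lamF.
  transitivity (\sum_(c | in_code A c && (c (val i) == val alpha)) lam c).
    rewrite [RHS]big_mkcondr; apply: eq_bigr => c _; rewrite /Xi.
    by case: ifP; rewrite ?mulr1 ?mulr0.
  rewrite (partition_big (fun c => restr c rho)
     (fun g => in_local_code g && (g i == val alpha))); last first.
    move=> c /andP[cc ei]; rewrite ffunE ei andbT.
    by move: cc; rewrite in_code_restr => /forallP; apply.
  apply: eq_bigr => g /andP[_ /eqP gi]; apply: eq_bigl => c.
  case: (eqVneq (restr c rho) g) => [e|]; rewrite ?andbF ?andbT //.
  by rewrite -gi -e ffunE eqxx andbT.
Qed.

Theorem chain_thm (F : 'I_N -> nzelt Rg -> K)
  (cover : forall i : 'I_N, exists rho, A rho i != 0)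
  (chain : forall rho1 rho2 : 'I_r, val rho2 = (val rho1).+1 ->
     exists s, [/\ A rho1 s != 0, A rho2 s != 0 &
        forall rho' : 'I_r, (rho' <= rho1)%N -> forall c, A rho' c != 0 -> A rho2 c != 0 -> c = s]) :
  (exists W, inQ F (A := A) W) <-> in_conv_hull (in_code A) F.
Proof.
split; last exact: conv_to_Q.
move=> [W hQ]; have [P HP] := build hQ chain (leqnn r).
exact: final hQ cover HP.
Qed.

End Chain.

From mathcomp Require Import zify.

Section Fm.
Variables (Rg : finNzRingType) (d : nat) (h : 'I_d -> Rg).
Hypotheses (hnz : forall k, h k != 0) (hd : (4 <= d)%N).

Definition fsp (r c : nat) : Prop :=
  (r = 0 /\ (c = 0 \/ c = 1 \/ c = d))%N \/
  (r <> 0 /\ r = d - 3 /\ (c = d + (d - 4) \/ c = d - 2 \/ c = d - 1))%N \/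
  (r <> 0 /\ r <> d - 3 /\ (c = d + r - 1 \/ c = r.+1 \/ c = d + r))%N.

Lemma hcnz (c : nat) : (c < d)%N ->
  (if @insub nat (fun k => (k < d)%N) 'I_d c is Some k then h k else 0) != 0.
Proof. by move=> hc; rewrite insubT. Qed.

Ltac brk := first
  [ case: ifP => [ /orP[/eqP ?|/eqP ?] | /norP[/eqP ? /eqP ?] ]
  | case: ifP => [/eqP ? | /eqP ?] ].

Lemma Fsupp (rho : 'I_(d - 2)) (c : 'I_(d + (d - 3))) :
  Fmat h rho c != 0 -> fsp rho c.
Proof.
rewrite mxE /= /fsp; repeat brk; try by rewrite eqxx.
all: move=> _; lia.
Qed.

Lemma Fnz (rho : 'I_(d - 2)) (c : 'I_(d + (d - 3))) :
  fsp rho c -> Fmat h rho c != 0.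
Proof.
rewrite /fsp => hf; have hr := ltn_ord rho; have hc := ltn_ord c.
rewrite mxE /=; repeat brk.
all: try (by apply: hcnz; lia).
all: try (by rewrite oner_eq0).
all: try (by rewrite oppr_eq0 oner_eq0).
all: exfalso; lia.
Qed.

Lemma Fcover (c : 'I_(d + (d - 3))) : exists rho : 'I_(d - 2), Fmat h rho c != 0.
Proof.
have hc := ltn_ord c.
have [k [hk hf]] : exists k, (k < d - 2)%N /\ fsp k c.
  rewrite /fsp.
  case: (ltnP c 2) => c2; first by exists 0%N; split; lia.
  case: (ltnP c (d - 2)) => c3; first by exists (c - 1)%N; split; lia.
  case: (ltnP c d) => c4; first by exists (d - 3)%N; split; lia.
  by exists (c - d)%N; split; lia.
by exists (Ordinal hk); exact: Fnz.
Qed.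

Lemma Fchain (rho1 rho2 : 'I_(d - 2)) : val rho2 = (val rho1).+1 ->
  exists s, [/\ Fmat h rho1 s != 0, Fmat h rho2 s != 0 &
    forall rho' : 'I_(d - 2), (rho' <= rho1)%N -> forall c,
      Fmat h rho' c != 0 -> Fmat h rho2 c != 0 -> c = s].
Proof.
move=> e; simpl in e; have h1 := ltn_ord rho1; have h2 := ltn_ord rho2.
have hs : (d + rho1 < d + (d - 3))%N by lia.
exists (Ordinal hs); split.
- by apply: Fnz; rewrite /fsp /=; lia.
- by apply: Fnz; rewrite /fsp /=; lia.
- move=> rho' le c /Fsupp f1 /Fsupp f2; apply: val_inj => /=.
  move: f1 f2; rewrite /fsp; have := ltn_ord rho'; lia.
Qed.
End Fm.

Unset Implicit Arguments.

Theorem corollary2 (K : realType) (Rg : finNzRingType) (m n : nat)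
  (H : 'M[Rg]_(m, n)) (j : 'I_m) (d : nat) (idx : 'I_d -> 'I_n)
  (idx_inj : injective idx)
  (idx_supp : forall i : 'I_n, H j i != 0 <-> exists k, idx k = i)
  (hd : (4 <= d)%N)
  (F : 'I_(d + (d - 3)) -> nzelt Rg -> K) :
  (exists W, inQ F (A := Fj H j idx) W) <->
  in_conv_hull (in_code (Fj H j idx)) F.
Proof.
have hnz : forall k, H j (idx k) != 0 by move=> k; apply/idx_supp; exists k.
rewrite /Fj; apply: chain_thm.
- exact: Fcover.
- exact: Fchain.
Qed.
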